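(* Let $d\ge 2$ and let $|\psi^1\rangle,|\psi^2\rangle\in\mathbb{C}^d$ be arbitrary one-qudit states. Consider eight qudits labelled $1,\dots,8$ in the state $$|\Psi\rangle=|\psi^1\rangle_1|\psi^2\rangle_5|H\rangle_{26}|H\rangle_{34}|H\rangle_{78},$$ where $|H\rangle=\sum_{j,k\in\mathbb{Z}_d}\omega^{jk}|j\rangle|k\rangle$. For $r,s,t\in\mathbb{Z}_d$ let $|b_{rst}\rangle=(X^r\otimes Z^s\otimes X^t)\sum_{m\in\mathbb{Z}_d}|m\rangle|m\rangle|m\rangle$ (these $d^3$ vectors form an orthogonal basis $B_2$ of three qudits). Suppose qudits $1,2,3$ (in this order) are measured in $B_2$ with outcome $r,s,t$ and qudits $5,6,7$ (in this order) are measured in $B_2$ with outcome $u,v,w$. Then the resulting (unnormalised) state of qudits $4,8$, namely $(\langle b_{rst}|_{123}\otimes\langle b_{uvw}|_{567})|\Psi\rangle$, equals, up to a nonzero scalar factor independent of $\psi^1,\psi^2$, $$Z_4^{t-r}Z_8^{w-u}X_4^{s+u}X_8^{v+r}F_4F_8C_{Z(4,8)}|\psi^1\rangle_4|\psi^2\rangle_8.$$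
   Context: $\omega=e^{2\pi i/d}$; $X|j\rangle=|j+1\bmod d\rangle$, $Z|j\rangle=\omega^j|j\rangle$, $F|j\rangle=\frac1{\sqrt d}\sum_{m\in\mathbb{Z}_d}\omega^{jm}|m\rangle$. $C_{Z(4,8)}$ is the controlled-$Z$ gate $|j\rangle_4|k\rangle_8\mapsto\omega^{jk}|j\rangle_4|k\rangle_8$. Subscripts indicate the qudit on which an operator acts. *)

(* Defs.v *)
From mathcomp Require Import all_boot all_order all_algebra.
From mathcomp Require Import reals realfun trigo.
From mathcomp Require Export complex.
Set Implicit Arguments. Unset Strict Implicit. Unset Printing Implicit Defensive.
Import Order.TTheory GRing.Theory Num.Theory.
Local Open Scope ring_scope.

Section Qudits.
Variables (R : realType) (d : nat).
Local Notation C := R[i].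

Definition omega : C := Complex (cos (2 * pi / d%:R)) (sin (2 * pi / d%:R)).

(* computational basis labels: Z_d (the statements assume 2 <= d) *)
Local Notation Zd := 'Z_d.

(* one-qudit states (amplitude functions) and one-qudit operators (matrix entries A j k = <j|A|k>) *)
Definition ket1 := Zd -> C.
Definition op1 := Zd -> Zd -> C.

Definition Xop : op1 := fun j k => ((j == k + 1)%:R : C).
Definition Zop : op1 := fun j k => ((j == k)%:R : C) * omega ^+ (val j).
Definition Fop : op1 := fun m j =>
  (Complex (Num.sqrt (d%:R : R)) 0)^-1 * omega ^+ (val j * val m)%N.

Definition opmul (A B : op1) : op1 := fun j k => \sum_(l : Zd) A j l * B l k.
Definition opid : op1 := fun j k => ((j == k)%:R : C).
Definition oppow (A : op1) (n : nat) : op1 := iter n (opmul A) opid.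

Definition cfg (n : nat) := {ffun 'I_n -> Zd}.
Definition state (n : nat) := cfg n -> C.

Definition upd n (x : cfg n) (i : 'I_n) (j : Zd) : cfg n :=
  [ffun k => if k == i then j else x k].

Definition act1 n (A : op1) (i : 'I_n) (psi : state n) : state n :=
  fun x => \sum_(j : Zd) A (x i) j * psi (upd x i j).

Definition CZ n (i j : 'I_n) (psi : state n) : state n :=
  fun x => omega ^+ (val (x i) * val (x j))%N * psi x.

Definition Hamp (j k : Zd) : C := omega ^+ (val j * val k)%N.

Definition ghz3 : state 3 :=
  fun x => ((x ord0 == x (inord 1)) && (x (inord 1) == x (inord 2)))%:R.

Definition bvec (r s t : Zd) : state 3 :=
  act1 (oppow Xop (val r)) ord0
    (act1 (oppow Zop (val s)) (inord 1)
      (act1 (oppow Xop (val t)) (inord 2) ghz3)).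

Definition cfg3 (a b c : Zd) : cfg 3 :=
  [ffun k : 'I_3 => if val k == 0%N then a else if val k == 1%N then b else c].

Definition cfg2 (a b : Zd) : cfg 2 :=
  [ffun k : 'I_2 => if val k == 0%N then a else b].

(* Qudits labelled 1..8 in the paper are indices 0..7 here. *)
Definition q (k : nat) : 'I_8 := inord k.-1.

Definition Psi (psi1 psi2 : ket1) : state 8 :=
  fun x => psi1 (x (q 1)) * psi2 (x (q 5)) * Hamp (x (q 2)) (x (q 6))
           * Hamp (x (q 3)) (x (q 4)) * Hamp (x (q 7)) (x (q 8)).

(* (<b_rst|_{123} (x) <b_uvw|_{567}) |Psi>, a state of qudits 4,8
   (index 0 of the result = qudit 4, index 1 = qudit 8) *)
Definition measured (r s t u v w : Zd) (Phi : state 8) : state 2 :=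
  fun y => \sum_(x : cfg 8 | (x (q 4) == y ord0) && (x (q 8) == y (inord 1)))
     (bvec r s t (cfg3 (x (q 1)) (x (q 2)) (x (q 3))))^*
     * (bvec u v w (cfg3 (x (q 5)) (x (q 6)) (x (q 7))))^* * Phi x.

(* |psi1>_4 |psi2>_8 as a 2-qudit state (index 0 = qudit 4, index 1 = qudit 8) *)
Definition prod2 (psi1 psi2 : ket1) : state 2 :=
  fun y => psi1 (y ord0) * psi2 (y (inord 1)).

Definition target (r s t u v w : Zd) (psi1 psi2 : ket1) : state 2 :=
  let i4 : 'I_2 := ord0 in let i8 : 'I_2 := inord 1 in
  act1 (oppow Zop (val (t - r))) i4
   (act1 (oppow Zop (val (w - u))) i8
    (act1 (oppow Xop (val (s + u))) i4
     (act1 (oppow Xop (val (v + r))) i8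
      (act1 Fop i4
       (act1 Fop i8
        (CZ i4 i8 (prod2 psi1 psi2))))))).

End Qudits.

(* Main.v *)
Require Import Defs.
From mathcomp Require Import all_boot all_order all_algebra.
From mathcomp Require Import reals complex.
From mathcomp Require Import trigo ring.
From Stdlib Require Import FunctionalExtensionality.
Import Order.TTheory GRing.Theory Num.Theory.
Local Open Scope ring_scope.
Section S.
Variables (R : realType) (n : nat).
Local Notation d := n.+2.
Local Notation C := R[i].
Local Notation w := (omega R d).
Local Notation Zd := 'Z_d.

Lemma mulcE (a b c e : R) : (Complex a b) * (Complex c e) = Complex (a * c - b * e) (a * e + b * c).
Proof. reflexivity. Qed.

Lemma wexp k : w ^+ k = Complex (cos (k%:R * (2 * pi / d%:R))) (sin (k%:R * (2 * pi / d%:R))).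
Proof.
elim: k => [|k IH]; first by rewrite expr0 !mul0r cos0 sin0.
rewrite exprS IH /omega mulcE; set th := (2 * pi / d%:R).
have -> : (k.+1)%:R * th = th + k%:R * th by rewrite -addn1 natrD mulrDl mul1r addrC.
rewrite cosD sinD.
congr Complex; ring.
Qed.

Lemma wd : w ^+ d = 1.
Proof.
rewrite wexp mulrCA mulrV ?mulr1; last by rewrite unitfE pnatr_eq0.
by rewrite mulr_natl cos2pi sin2pi.
Qed.

Lemma wmod m : w ^+ (m %% d) = w ^+ m.
Proof. by rewrite {2}(divn_eq m d) exprD mulnC exprM wd expr1n mul1r. Qed.

Definition E (a : Zd) : C := w ^+ val a.

Lemma EE (a b : Zd) : E (a + b) = E a * E b.
Proof. by rewrite /E /= wmod exprD. Qed.

Lemma EM (a b : Zd) : w ^+ (val a * val b) = E (a * b).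
Proof. by rewrite /E /= wmod. Qed.

Lemma E0 : E 0 = 1.
Proof. by rewrite /E /= expr0. Qed.

Lemma Enz a : E a != 0.
Proof.
apply/eqP=> h; have := EE a (-a); rewrite h mul0r addrN E0 => /eqP.
by rewrite oner_eq0.
Qed.

Lemma conjw : w^* * w = 1.
Proof.
rewrite /omega mulcE; set x := cos _; set y := sin _.
have -> : x * x - - y * y = 1 by rewrite /x /y mulNr opprK -!expr2 cos2sin2 subrK.
by rewrite mulNr mulrC subrr.
Qed.

Lemma conjE a : (E a)^* = E (- a).
Proof.
apply: (mulIf (Enz a)); rewrite -EE addNr E0 /E rmorphXn.
by rewrite -exprMn conjw expr1n.
Qed.

Lemma Xpow m (j k : Zd) : oppow (@Xop R d) m j k = (j == k + m%:R)%:R.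
Proof.
elim: m j k => [|m IH] j k; first by rewrite /oppow /= addr0.
rewrite /oppow iterS -/(oppow _ m) /opmul (bigD1 (j - 1)) //= big1 ?addr0.
  rewrite IH /Xop subrK eqxx mul1r; congr (_%:R); congr nat_of_bool.
  by rewrite -[m.+1]addn1 natrD addrA subr_eq.
move=> l /negbTE hl; rewrite /Xop.
case: eqP => [hj|]; last by rewrite mul0r.
by move: hl; rewrite hj addrK eqxx.
Qed.

Lemma Zpow m (j k : Zd) : oppow (@Zop R d) m j k = (j == k)%:R * w ^+ (m * val j).
Proof.
elim: m j k => [|m IH] j k; first by rewrite /oppow /= mulr1.
rewrite /oppow iterS -/(oppow _ m) /opmul (bigD1 j) //= big1 ?addr0.
  by rewrite IH /Zop eqxx mul1r mulrCA -exprD mulSn.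
by move=> l /negbTE hl; rewrite /Zop eq_sym hl mul0r mul0r.
Qed.

Lemma updK N (x : cfg d N) i : upd x i (x i) = x.
Proof. by apply/ffunP=> k; rewrite ffunE; case: eqP => // ->. Qed.

Lemma actX N m (i : 'I_N) psi x :
  act1 (oppow (@Xop R d) m) i psi x = psi (upd x i (x i - m%:R)).
Proof.
rewrite /act1 (bigD1 (x i - m%:R)) //= big1 ?addr0.
  by rewrite Xpow subrK eqxx mul1r.
by move=> l /negbTE hl; rewrite Xpow -subr_eq eq_sym hl mul0r.
Qed.

Lemma actZ N m (i : 'I_N) psi x :
  act1 (oppow (@Zop R d) m) i psi x = w ^+ (m * val (x i)) * psi x.
Proof.
rewrite /act1 (bigD1 (x i)) //= big1 ?addr0.
  by rewrite Zpow eqxx mul1r updK.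
by move=> l /negbTE hl; rewrite Zpow eq_sym hl !mul0r.
Qed.

Lemma natrZ (a : Zd) : (val a)%:R = a.
Proof. exact: natr_Zp. Qed.

Lemma cfg3E (a b c : Zd) k : cfg3 a b c k = if val k == 0%N then a else if val k == 1%N then b else c.
Proof. by rewrite ffunE. Qed.

Lemma i3_1 : nat_of_ord (inord 1 : 'I_3) = 1%N. Proof. by rewrite inordK. Qed.
Lemma i3_2 : nat_of_ord (inord 2 : 'I_3) = 2%N. Proof. by rewrite inordK. Qed.
Lemma v3_1 : \val (inord 1 : 'I_3) = 1%N. Proof. exact: i3_1. Qed.
Lemma v3_2 : \val (inord 2 : 'I_3) = 2%N. Proof. exact: i3_2. Qed.

Lemma upd3_0 (a b c j : Zd) : upd (cfg3 a b c) ord0 j = cfg3 j b c.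
Proof. by apply/ffunP=> k; rewrite !ffunE; case: k => [[|[|[|k]]] hk]. Qed.
Lemma upd3_2 (a b c j : Zd) : upd (cfg3 a b c) (inord 2) j = cfg3 a b j.
Proof.
apply/ffunP=> k; rewrite !ffunE; case: k => [[|[|[|k]]] hk] //=;
  rewrite -val_eqE /= i3_2 //.
Qed.

Lemma bvecE (r s t a b c : Zd) :
  bvec R r s t (cfg3 a b c) = ((a - r == b) && (b == c - t))%:R * E (s * b).
Proof.
rewrite /bvec actX cfg3E /= natrZ upd3_0 actZ cfg3E v3_1 /= EM actX cfg3E v3_2 /= natrZ upd3_2.
by rewrite /ghz3 !cfg3E /= ?v3_1 ?v3_2 /= mulrC.
Qed.

Lemma conjI (bb : bool) (z : Zd) : ((bb%:R : C) * E z)^* = bb%:R * E (- z).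
Proof. by rewrite rmorphM /= conjE rmorph_nat. Qed.

Lemma qO k (hk : (k < 8)%N) : Ordinal hk = q k.+1.
Proof. by apply: val_inj; rewrite /q /= inordK. Qed.

Lemma q_val k : (0 < k <= 8)%N -> nat_of_ord (q k) = k.-1.
Proof. by case/andP=> h1 h2; rewrite /q inordK // prednK. Qed.

Section Meas.
Variables (r s t u v w : Zd) (y0 y1 : Zd).
Definition mk (a b : Zd) : cfg d 8 :=
  [ffun i : 'I_8 => nth a [:: a; a - r; a - r + t; y0; b; b - u; b - u + w; y1] i].

Lemma mkE a b k : (0 < k <= 8)%N -> mk a b (q k) = nth a [:: a; a - r; a - r + t; y0; b; b - u; b - u + w; y1] k.-1.
Proof. by move=> hk; rewrite ffunE q_val. Qed.

Lemma mk1 a b : mk a b (q 1) = a. Proof. by rewrite mkE. Qed.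
Lemma mk2 a b : mk a b (q 2) = a - r. Proof. by rewrite mkE. Qed.
Lemma mk3 a b : mk a b (q 3) = a - r + t. Proof. by rewrite mkE. Qed.
Lemma mk4 a b : mk a b (q 4) = y0. Proof. by rewrite mkE. Qed.
Lemma mk5 a b : mk a b (q 5) = b. Proof. by rewrite mkE. Qed.
Lemma mk6 a b : mk a b (q 6) = b - u. Proof. by rewrite mkE. Qed.
Lemma mk7 a b : mk a b (q 7) = b - u + w. Proof. by rewrite mkE. Qed.
Lemma mk8 a b : mk a b (q 8) = y1. Proof. by rewrite mkE. Qed.
Lemma mk_uniq (x : cfg d 8) : x (q 4) = y0 -> x (q 8) = y1 ->
  (x (q 1) - r == x (q 2)) && (x (q 2) == x (q 3) - t) ->
  (x (q 5) - u == x (q 6)) && (x (q 6) == x (q 7) - w) ->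
  x = mk (x (q 1)) (x (q 5)).
Proof.
move=> h4 h8 /andP[/eqP h2 /eqP h3] /andP[/eqP h6 /eqP h7].
apply/ffunP=> i; rewrite ffunE; case: i => [[|[|[|[|[|[|[|[|k]]]]]]]] hk] //=;
  rewrite qO //.
- by rewrite h2 h3 subrK.
- by rewrite h6 h7 subrK.
Qed.
Definition Gm (psi1 psi2 : ket1 R d) (x : cfg d 8) :=
  (bvec R r s t (cfg3 (x (q 1)) (x (q 2)) (x (q 3))))^*
  * (bvec R u v w (cfg3 (x (q 5)) (x (q 6)) (x (q 7))))^* * Psi psi1 psi2 x.

Lemma measE (y : cfg d 2) psi1 psi2 : y ord0 = y0 -> y (inord 1) = y1 ->
  measured r s t u v w (Psi psi1 psi2) y = \sum_(a : Zd) \sum_(b : Zd) Gm psi1 psi2 (mk a b).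
Proof.
move=> hy0 hy1.
rewrite /measured (partition_big (fun x : cfg d 8 => (x (q 1), x (q 5))) predT) //=.
rewrite pair_big; apply: eq_bigr => -[a b] _ /=.
rewrite (bigD1 (mk a b)) /=; last first.
  by rewrite !mkE //= hy0 hy1 !eqxx.
rewrite big1 ?addr0 //.
move=> x /andP[/andP[/andP[/eqP h4 /eqP h8] /eqP hp] hne].
rewrite /Gm !bvecE !conjI.
have [h1|h1] := boolP ((x (q 1) - r == x (q 2)) && (x (q 2) == x (q 3) - t)); last by rewrite /= !(mul0r, mulr0).
have [h2|h2] := boolP ((x (q 5) - u == x (q 6)) && (x (q 6) == x (q 7) - w)); last by rewrite /= !(mul0r, mulr0).
case: hp => ha hb.
have := @mk_uniq x (etrans h4 hy0) (etrans h8 hy1) h1 h2.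
by rewrite ha hb => hx; rewrite hx eqxx in hne.
Qed.
Lemma GmE psi1 psi2 a b : Gm psi1 psi2 (mk a b) =
  E (- (s * (a - r))) * E (- (v * (b - u))) * (psi1 a * psi2 b * E ((a - r) * (b - u))
   * E ((a - r + t) * y0) * E ((b - u + w) * y1)).
Proof.
rewrite /Gm /Psi /Hamp !(mk1, mk2, mk3, mk4, mk5, mk6, mk7, mk8) !bvecE !conjI !addrK !eqxx !mul1r !EM.
done.
Qed.
End Meas.

Lemma upd2_0 (y : cfg d 2) (j : Zd) : upd y ord0 j = cfg2 j (y (inord 1)).
Proof.
apply/ffunP=> i; rewrite !ffunE; case: i => [[|[|k]] hk] //=.
by apply: f_equal; apply: val_inj; rewrite /= inordK.
Qed.
Lemma v2_1 : \val (inord 1 : 'I_2) = 1%N. Proof. exact: inordK. Qed.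
Lemma upd2_1 (y : cfg d 2) (j : Zd) : upd y (inord 1) j = cfg2 (y ord0) j.
Proof.
apply/ffunP=> i; rewrite !ffunE; case: i => [[|[|k]] hk] //=;
  rewrite -val_eqE /= v2_1 //=.
by apply: f_equal; apply: val_inj.
Qed.
Lemma cfg2_0 (a b : Zd) : cfg2 a b ord0 = a. Proof. by rewrite ffunE. Qed.
Lemma cfg2_1 (a b : Zd) : cfg2 a b (inord 1) = b. Proof. by rewrite ffunE v2_1. Qed.

Definition k0 : C := (Complex (Num.sqrt (d%:R : R)) 0)^-1.

Lemma k0nz : k0 != 0.
Proof.
rewrite /k0 invr_eq0; apply/eqP => -[] /eqP.
by rewrite sqrtr_eq0 leNgt ltr0Sn.
Qed.

Lemma targetE (r s t u v w : Zd) (psi1 psi2 : ket1 R d) (y : cfg d 2) :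
  target r s t u v w psi1 psi2 y =
  E ((t - r) * y ord0) * (E ((w - u) * y (inord 1)) *
   \sum_(i : Zd) k0 * E (i * (y ord0 - (s + u))) *
     \sum_(i0 : Zd) k0 * E (i0 * (y (inord 1) - (v + r))) * (E (i * i0) * (psi1 i * psi2 i0))).
Proof.
rewrite /target !actZ !actX upd2_0 cfg2_1 upd2_1 cfg2_0 !natrZ !EM.
rewrite /act1 /CZ /prod2 /Fop cfg2_0.
under eq_bigr do under eq_bigr do rewrite upd2_0 cfg2_1 upd2_1 !cfg2_0 !cfg2_1 !EM.
by under eq_bigr do rewrite EM.
Qed.
Lemma main (r s t u v w : Zd) :
  exists c : C, c != 0 /\
    forall psi1 psi2 : Zd -> C,
      measured r s t u v w (Psi psi1 psi2) = (fun y => c * target r s t u v w psi1 psi2 y).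
Proof.
exists (E (s * r + v * u + r * u) / (k0 * k0)); split.
  by rewrite mulf_neq0 ?invr_eq0 ?mulf_neq0 ?Enz ?k0nz.
move=> psi1 psi2; apply: functional_extensionality => y.
set y0 := y ord0; set y1 := y (inord 1).
rewrite (@measE r s t u v w y0 y1 y psi1 psi2 erefl erefl) targetE -/y0 -/y1.
rewrite !mulr_sumr; apply: eq_bigr => a _.
rewrite !mulr_sumr; apply: eq_bigr => b _.
rewrite GmE.
transitivity (psi1 a * psi2 b * (E (- (s * (a - r))) * E (- (v * (b - u))) * E ((a - r) * (b - u))
   * E ((a - r + t) * y0) * E ((b - u + w) * y1))); first by ring.
symmetry.
transitivity (psi1 a * psi2 b * (E (s * r + v * u + r * u) * E ((t - r) * y0) * E ((w - u) * y1)
   * E (a * (y0 - (s + u))) * E (b * (y1 - (v + r))) * E (a * b)) * ((k0 * k0)^-1 * (k0 * k0))).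
  by ring.
rewrite mulVf ?mulf_neq0 ?k0nz // mulr1 -!EE.
congr (_ * E _); ring.
Qed.
End S.

Theorem lemma1 (R : realType) (d : nat) (hd : (2 <= d)%N) (r s t u v w : 'Z_d) :
  exists c : R[i], c != 0 /\
    forall psi1 psi2 : 'Z_d -> R[i],
      measured r s t u v w (Psi psi1 psi2) = (fun y => c * target r s t u v w psi1 psi2 y).
Proof.
case: d hd r s t u v w => [|[|n]] // _ r s t u v w.
exact: main.
Qed.
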